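(* Let $G$ be a non-bipartite graph whose edge set decomposes into two bipartite spanning subgraphs $H_1$ and $H_2$ (i.e. $V(H_1)=V(H_2)=V(G)$, $E(H_1)\cap E(H_2)=\emptyset$, $E(H_1)\cup E(H_2)=E(G)$) such that $\Delta(G)=2\Delta(H_1)=2\Delta(H_2)$. If $H_1$ and $H_2$ have good signings, then the lexicographic product $G \circ \overline{K_2}$ has a good signing.
   Context: For a graph $H$ and an edge-signing $\sigma: E(H)\to\{-1,1\}$, the signed adjacency matrix $A^{\sigma}$ has $(i,j)$ entry $\sigma(ij)$ if $ij\in E(H)$ and $0$ otherwise; $\rho(H^\sigma)$ is the maximum absolute value of an eigenvalue of $A^\sigma$. A signing $\sigma$ of $H$ (with $\Delta(H)>1$) is a good signing if $\rho(H^\sigma)\le 2\sqrt{\Delta(H)-1}$, where $\Delta(H)$ is the maximum degree. $\overline{K_2}$ is the edgeless graph on two vertices. The lexicographic product $G\circ H$ has vertex set $V(G)\times V(H)$, with $(x,y)$ adjacent to $(z,t)$ iff $xz\in E(G)$, or $x=z$ and $yt\in E(H)$. *)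

(* Defs.v *)
From HB Require Import structures.
From mathcomp Require Import all_boot all_order all_algebra all_field.
Set Implicit Arguments. Unset Strict Implicit. Unset Printing Implicit Defensive.
Import Order.TTheory GRing.Theory Num.Theory.
Local Open Scope ring_scope.

Record sgraph (V : finType) := SGraph {
  adj : rel V;
  adj_sym : symmetric adj;
  adj_irr : irreflexive adj }.

Definition degree (V : finType) (G : sgraph V) (x : V) : nat :=
  #|[set y | adj G x y]|.

Definition max_degree (V : finType) (G : sgraph V) : nat :=
  (\max_(x : V) degree G x)%N.

Definition bipartite (V : finType) (G : sgraph V) : Prop :=
  exists f : V -> bool, forall x y, adj G x y -> f x != f y.

(* A signing assigns a sign to every (unordered) edge; we represent it by a
   function s : V -> V -> bool (true = -1, false = +1) which is symmetric on
   edges, so that it is a well-defined function on unordered edges. *)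
Definition is_signing (V : finType) (G : sgraph V) (s : V -> V -> bool) : Prop :=
  forall x y, adj G x y -> s x y = s y x.

Definition sgn (b : bool) : algC := if b then -1 else 1.

Definition signed_adj (V : finType) (G : sgraph V) (s : V -> V -> bool)
  : 'M[algC]_#|V| :=
  \matrix_(i, j) (if adj G (enum_val i) (enum_val j)
                  then sgn (s (enum_val i) (enum_val j)) else 0).

Definition good_signing (V : finType) (G : sgraph V) (s : V -> V -> bool) : Prop :=
  [/\ (1 < max_degree G)%N, is_signing G s &
      forall a : algC, eigenvalue (signed_adj G s) a ->
        `|a| <= 2 * sqrtC ((max_degree G).-1)%:R].

Definition has_good_signing (V : finType) (G : sgraph V) : Prop :=
  exists s, good_signing G s.

Section Lex.
Variables (V W : finType) (G : sgraph V) (H : sgraph W).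
Definition lex_adj : rel (V * W)%type :=
  fun p q => adj G p.1 q.1 || ((p.1 == q.1) && adj H p.2 q.2).
Lemma lex_adj_sym : symmetric lex_adj.
Proof.
move=> [x y] [z t]; rewrite /lex_adj /= (adj_sym G) (adj_sym H) eq_sym //.
Qed.
Lemma lex_adj_irr : irreflexive lex_adj.
Proof. by move=> [x y]; rewrite /lex_adj /= !adj_irr eqxx. Qed.
Definition lexprod : sgraph (V * W)%type := SGraph lex_adj_sym lex_adj_irr.
End Lex.

Definition K2bar : sgraph bool :=
  @SGraph bool (fun _ _ => false) (fun _ _ => erefl) (fun _ => erefl).

(* Main.v *)
Require Import Defs.
From HB Require Import structures.
From mathcomp Require Import all_boot all_order all_algebra all_field.
From mathcomp Require Import ring zify.
Import Order.TTheory GRing.Theory Num.Theory.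

Section Helpers.
Set Implicit Arguments.
Local Open Scope ring_scope.

Lemma eig_fun (T : finType) (M : T -> T -> algC) a :
  eigenvalue (\matrix_(i, j) M (enum_val i) (enum_val j) : 'M_#|T|) a <->
  exists2 f : T -> algC, (exists x, f x != 0) &
     forall y, \sum_x f x * M x y = a * f y.
Proof.
split.
  move/eigenvalueP => [v Hv nz].
  exists (fun x => v 0 (enum_rank x)).
    case: (pickP (fun i => v 0 i != 0)) => [i Hi|H].
      by exists (enum_val i); rewrite enum_valK.
    move/negP: nz; case; apply/eqP/rowP => i; rewrite mxE.
    by move: (H i) => /negbFE/eqP.
  move=> y; move/rowP/(_ (enum_rank y)): Hv; rewrite !mxE => <-.
  rewrite (reindex (fun i : 'I_#|T| => enum_val i)) /=; last exact: onW_bij (enum_val_bij T).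
  by apply: eq_bigr => j _; rewrite !mxE enum_valK enum_rankK.
move=> [f [x Hx] Hf]; apply/eigenvalueP.
exists (\row_i f (enum_val i)).
  apply/rowP => j; rewrite !mxE -Hf.
  rewrite [RHS](reindex (fun i : 'I_#|T| => enum_val i)) /=; last exact: onW_bij (enum_val_bij T).
  by apply: eq_bigr => i _; rewrite !mxE.
apply/negP => /eqP/rowP H; move: Hx; have := H (enum_rank x).
by rewrite !mxE enum_rankK => ->; rewrite eqxx.
Qed.

Lemma bound_from (V : finType) (H : sgraph V) s (f : V -> algC) b :
  good_signing H s -> (exists x, f x != 0) ->
  (forall y, \sum_x f x * (if adj H x y then sgn (s x y) else 0) = b * f y) ->
  `|b| <= 2 * sqrtC ((max_degree H).-1)%:R.
Proof.
move=> [_ _ Hg] nz Hf; apply: Hg; rewrite /signed_adj.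
have E := proj2 (@eig_fun V (fun x y => if adj H x y then sgn (s x y) else 0) b).
exact: (E (ex_intro2 _ _ f nz Hf)).
Qed.

Lemma sum_pair (V : finType) (F : V * bool -> algC) :
  \sum_q F q = \sum_x (F (x, true) + F (x, false)).
Proof.
rewrite [RHS](eq_bigr (fun x => \sum_b F (x, b))); last by move=> x _; rewrite big_bool.
by rewrite pair_bigA; apply: eq_bigr => [[x b]].
Qed.

Lemma deg_lex (V : finType) (G : sgraph V) x b :
  degree (lexprod G K2bar) (x, b) = (2 * degree G x)%N.
Proof.
rewrite /degree.
have -> : [set q | adj (lexprod G K2bar) (x, b) q] =
          setX [set y | adj G x y] [set: bool].
  by apply/setP => [[y c]]; rewrite !inE /= /lex_adj /= andbF orbF andbT.
by rewrite cardsX cardsT card_bool mulnC.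
Qed.

Lemma maxdeg_lex (V : finType) (G : sgraph V) :
  (0 < #|V|)%N -> (2 * max_degree G <= max_degree (lexprod G K2bar))%N.
Proof.
move=> h; rewrite /max_degree; have [x ->] := bigop.eq_bigmax (degree G) h.
by rewrite -(deg_lex G x true); apply: (leq_bigmax (F := degree (lexprod G K2bar))).
Qed.

Lemma sqrt_bound (d D : nat) : (1 < d)%N -> (4 * d <= D)%N ->
  2 * (2 * sqrtC (d.-1)%:R) <= 2 * sqrtC (D.-1)%:R :> algC.
Proof.
move=> h1 h2; rewrite ler_pM2l ?ltr0n //.
have -> : 2 = sqrtC 4 :> algC.
  by rewrite -[4](_ : 2 ^+ 2 = _) ?sqrCK ?ler0n // expr2 -natrM.
rewrite -sqrtCM ?nnegrE ?ler0n //.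
have -> : (4 : algC) * (d.-1)%:R = (4 * d.-1)%:R by rewrite natrM.
rewrite ler_sqrtC ?nnegrE ?ler0n // ler_nat.
lia.
Qed.

End Helpers.
Unset Implicit Arguments.
Local Open Scope ring_scope.

Theorem mainTheorem2 (V : finType) (G H1 H2 : sgraph V) :
  ~ bipartite G ->
  bipartite H1 -> bipartite H2 ->
  (forall x y, adj G x y = adj H1 x y || adj H2 x y) ->
  (forall x y, ~~ (adj H1 x y && adj H2 x y)) ->
  max_degree G = (2 * max_degree H1)%N ->
  max_degree G = (2 * max_degree H2)%N ->
  has_good_signing H1 -> has_good_signing H2 ->
  has_good_signing (lexprod G K2bar).
Proof.
move=> _ _ _ hG hdis hd1 hd2 [s1 gs1] [s2 gs2].
have gs1' := gs1; have gs2' := gs2.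
case: gs1' => d1gt sig1 _; case: gs2' => d2gt sig2 _.
have Vn : (0 < #|V|)%N.
  case: (pickP (fun _ : V => true)) => [x _|H].
    by apply/card_gt0P; exists x.
  by move: d1gt; rewrite /max_degree big_pred0.
have hD := maxdeg_lex G Vn.
pose s (p q : V * bool) :=
  if adj H1 p.1 q.1 then s1 p.1 q.1 else addb (s2 p.1 q.1) (p.2 != q.2).
exists s; split.
- move: d1gt hD; rewrite hd1; lia.
- move=> [x b] [y c]; rewrite /= /lex_adj /= andbF orbF hG /s /= => /orP [h|h].
    by rewrite h (adj_sym H1) h sig1.
  case h1: (adj H1 x y); first by rewrite (adj_sym H1) h1 sig1.
  by rewrite (adj_sym H1) h1 sig2 // eq_sym.
move=> a.
rewrite /signed_adj.
move/(@eig_fun (V * bool)%type (fun p q => if adj (lexprod G K2bar) p q then sgn (s p q) else 0)).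
move=> [g [[x0 b0] nz] Hf].
pose u x := g (x, true) + g (x, false).
pose w x := g (x, true) - g (x, false).
pose W (p q : V * bool) :=
  if adj (lexprod G K2bar) p q then sgn (s p q) else 0.
pose M1 x y := if adj H1 x y then sgn (s1 x y) else 0.
pose M2 x y := if adj H2 x y then sgn (s2 x y) else 0.
have cl1 : forall x y, (g (x, true) * W (x, true) (y, true) + g (x, false) * W (x, false) (y, true))
   + (g (x, true) * W (x, true) (y, false) + g (x, false) * W (x, false) (y, false))
   = 2 * (u x * M1 x y).
  move=> x y; rewrite /W /s /M1 /u /= /lex_adj /= andbF orbF hG.
  case: (adj H1 x y); case: (adj H2 x y); rewrite /sgn /=;
    case: (s1 x y); case: (s2 x y); rewrite /=; ring.
have cl2 : forall x y, (g (x, true) * W (x, true) (y, true) + g (x, false) * W (x, false) (y, true))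
   - (g (x, true) * W (x, true) (y, false) + g (x, false) * W (x, false) (y, false))
   = 2 * (w x * M2 x y).
  move=> x y; rewrite /W /s /M2 /w /= /lex_adj /= andbF orbF hG.
  have := hdis x y.
  case: (adj H1 x y); case: (adj H2 x y); rewrite /sgn /= // => _;
    case: (s1 x y); case: (s2 x y); rewrite /=; ring.
have two0 : (2 : algC) != 0 by rewrite pnatr_eq0.
have eqU : forall y, \sum_x u x * M1 x y = (a / 2) * u y.
  move=> y; apply: (mulfI two0); rewrite mulr_sumr.
  under eq_bigr => x _ do rewrite -cl1.
  rewrite big_split /= -(@sum_pair V (fun q => g q * W q (y, true))) -(@sum_pair V (fun q => g q * W q (y, false))) /W.
  rewrite (Hf (y, true)) (Hf (y, false)) /u; field; done.
have eqW : forall y, \sum_x w x * M2 x y = (a / 2) * w y.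
  move=> y; apply: (mulfI two0); rewrite mulr_sumr.
  under eq_bigr => x _ do rewrite -cl2.
  rewrite sumrB /= -(@sum_pair V (fun q => g q * W q (y, true))) -(@sum_pair V (fun q => g q * W q (y, false))) /W.
  rewrite (Hf (y, true)) (Hf (y, false)) /w; field; done.
have key : `|a / 2| <= 2 * sqrtC ((max_degree H1).-1)%:R.
  have [hu|hu] := eqVneq (u x0) 0.
    have [hw|hw] := eqVneq (w x0) 0.
      exfalso; move: nz; rewrite /u /w in hu hw.
      have e1 : g (x0, true) = 0.
        apply: (mulfI two0); rewrite mulr0 -[RHS](addr0 0).
        by rewrite -{1}hu -hw; ring.
      have e2 : g (x0, false) = 0.
        apply: (mulfI two0); rewrite mulr0 -[RHS](subr0 0).
        by rewrite -{1}hu -hw; ring.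
      by case: b0; rewrite ?e1 ?e2 eqxx.
    have := bound_from w (a/2) gs2 (ex_intro _ x0 hw) eqW.
    by have -> : max_degree H2 = max_degree H1 by move: hd1 hd2; lia.
  exact: bound_from u (a/2) gs1 (ex_intro _ x0 hu) eqU.
have -> : a = 2 * (a / 2) by field.
rewrite normrM ger0_norm ?ler0n //.
have H4 : (4 * max_degree H1 <= max_degree (lexprod G K2bar))%N.
  by move: hD; rewrite hd1; lia.
have S := sqrt_bound (max_degree H1) (max_degree (lexprod G K2bar)) d1gt H4.
apply: (le_trans _ S).
by rewrite ler_pM2l ?ltr0n.
Qed.
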